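(* Let $a,b,c\in\mathbb{R}$ and let $\Omega\subset\mathbb{R}^4$ be an open set, with coordinates $(\tau,u,v,w)$, on which $u,v,w$ are pairwise distinct and $H^{(2)}:=u^2+v^2+w^2-2(a+b+c)\tau>0$. On $\Omega$ consider the vector fields $$U=\Big(\frac{c}{u-v}+\frac{b}{u-w}\Big)\partial_u+\Big(\frac{a}{v-w}+\frac{c}{v-u}\Big)\partial_v+\Big(\frac{b}{w-u}+\frac{a}{w-v}\Big)\partial_w,\qquad E=u\partial_u+v\partial_v+w\partial_w,$$ and the bivector field $$\Lambda=(E-2\tau U)\wedge\partial_\tau+E\wedge U .$$ Then $\Lambda$ is a Poisson bivector (i.e. its Schouten bracket with itself vanishes, $[\Lambda,\Lambda]=0$), and the vector field $\partial_\tau+U$ is Hamiltonian with respect to $\Lambda$ with Hamiltonian function $H=\tfrac12\ln H^{(2)}$, namely $\partial_\tau+U=\Lambda(dH)$.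
   Context: The vector field $\partial_\tau+U$ is the suspension (time-extension) of the autonomous system $u'=\frac{c}{u-v}+\frac{b}{u-w}$, $v'=\frac{a}{v-w}+\frac{c}{v-u}$, $w'=\frac{b}{w-u}+\frac{a}{w-v}$, with $\tau$ the time variable. For vector fields $X,Y$ and a one-form $\alpha$, the contraction convention is $(X\wedge Y)(\alpha)=\alpha(X)\,Y-\alpha(Y)\,X$, extended linearly to sums of such bivectors. *)

(* Defs.v *)
From Stdlib Require Import Reals.
From Coquelicot Require Import Coquelicot.
Open Scope R_scope.

(* Points of R^4 with coordinates (tau, u, v, w); index 0 = tau, 1 = u, 2 = v, 3 = w. *)
Definition pt : Type := (R * R * R * R)%type.

Definition coord (p : pt) (i : nat) : R :=
  let '(t, u, v, w) := p in
  match i with 0%nat => t | 1%nat => u | 2%nat => v | 3%nat => w | _ => 0 end.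

Definition upd (p : pt) (i : nat) (s : R) : pt :=
  let '(t, u, v, w) := p in
  match i with
  | 0%nat => (s, u, v, w) | 1%nat => (t, s, v, w)
  | 2%nat => (t, u, s, w) | 3%nat => (t, u, v, s) | _ => p end.

Definition partial (i : nat) (f : pt -> R) (p : pt) : R :=
  Derive (fun s => f (upd p i s)) (coord p i).

Definition sum4 (f : nat -> R) : R := f 0%nat + f 1%nat + f 2%nat + f 3%nat.

Definition open4 (O : pt -> Prop) : Prop :=
  forall p, O p -> exists eps : R, 0 < eps /\
    forall q : pt, (forall i, (i < 4)%nat -> Rabs (coord q i - coord p i) < eps) -> O q.

Definition vfield := nat -> pt -> R.
Definition bivector := nat -> nat -> pt -> R.

(* (X /\ Y)^{ij} = X^i Y^j - X^j Y^i, so that (X/\Y)(alpha) = alpha(X) Y - alpha(Y) X. *)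
Definition wedge (X Y : vfield) : bivector := fun i j p => X i p * Y j p - X j p * Y i p.

Definition badd (L M : bivector) : bivector := fun i j p => L i j p + M i j p.

Definition contract (L : bivector) (alpha : nat -> pt -> R) : vfield :=
  fun j p => sum4 (fun i => alpha i p * L i j p).

Definition dfun (f : pt -> R) : nat -> pt -> R := fun i p => partial i f p.

Definition schouten_self (L : bivector) (i j k : nat) (p : pt) : R :=
  2 * sum4 (fun l => L l i p * partial l (L j k) p
                   + L l j p * partial l (L k i) p
                   + L l k p * partial l (L i j) p).

Definition is_poisson_on (O : pt -> Prop) (L : bivector) : Prop :=
  forall p, O p -> forall i j k, (i < 4)%nat -> (j < 4)%nat -> (k < 4)%nat ->
    schouten_self L i j k p = 0.

Definition tau_ (p : pt) := coord p 0. Definition u_ (p : pt) := coord p 1.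
Definition v_ (p : pt) := coord p 2. Definition w_ (p : pt) := coord p 3.

Definition Ufield (a b c : R) : vfield := fun i p =>
  let u := u_ p in let v := v_ p in let w := w_ p in
  match i with
  | 1%nat => c / (u - v) + b / (u - w)
  | 2%nat => a / (v - w) + c / (v - u)
  | 3%nat => b / (w - u) + a / (w - v)
  | _ => 0 end.

Definition Efield : vfield := fun i p =>
  match i with 1%nat => u_ p | 2%nat => v_ p | 3%nat => w_ p | _ => 0 end.

Definition dtau : vfield := fun i _ => match i with 0%nat => 1 | _ => 0 end.

Definition Lambda (a b c : R) : bivector :=
  badd (wedge (fun i p => Efield i p - 2 * tau_ p * Ufield a b c i p) dtau)
       (wedge Efield (Ufield a b c)).

Definition H2 (a b c : R) (p : pt) : R :=
  u_ p ^ 2 + v_ p ^ 2 + w_ p ^ 2 - 2 * (a + b + c) * tau_ p.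

Definition Ham (a b c : R) (p : pt) : R := / 2 * ln (H2 a b c p).

(* Main.v *)
Require Import Defs.
From Stdlib Require Import Reals Lra Lia.
From Coquelicot Require Import Coquelicot.
Open Scope R_scope.

Ltac kill_derive :=
  repeat match goal with
  | |- context [Derive ?f ?x] =>
      let l := fresh "l" in evar (l : R);
      rewrite (is_derive_unique f x l); [| subst l; auto_derive; [repeat split; auto | reflexivity]];
      subst l
  end.

Lemma schouten0 (a b c t u v w : R) : u - v <> 0 -> u - w <> 0 -> v - w <> 0 ->
  v - u <> 0 -> w - u <> 0 -> w - v <> 0 ->
  forall i j k, (i < 4)%nat -> (j < 4)%nat -> (k < 4)%nat ->
  schouten_self (Lambda a b c) i j k (t,u,v,w) = 0.
Proof.
intros h1 h2 h3 h4 h5 h6 i j k Hi Hj Hk.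
destruct i as [|[|[|[|i]]]]; try lia;
destruct j as [|[|[|[|j]]]]; try lia;
destruct k as [|[|[|[|k]]]]; try lia;
unfold schouten_self, sum4, partial, Lambda, badd, wedge, Efield, Ufield, dtau, tau_, u_, v_, w_; simpl;
kill_derive; field; repeat split; auto; nra.

Qed.
Lemma ham_ok (a b c t u v w : R) : u - v <> 0 -> u - w <> 0 -> v - w <> 0 ->
  v - u <> 0 -> w - u <> 0 -> w - v <> 0 -> 0 < H2 a b c (t,u,v,w) ->
  forall j, (j < 4)%nat ->
  dtau j (t,u,v,w) + Ufield a b c j (t,u,v,w) =
  contract (Lambda a b c) (dfun (Ham a b c)) j (t,u,v,w).
Proof.
intros h1 h2 h3 h4 h5 h6 hp j Hj.
unfold H2, tau_, u_, v_, w_ in hp; simpl in hp.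
assert (hn : u ^ 2 + v ^ 2 + w ^ 2 - 2 * (a + b + c) * t <> 0) by lra.
destruct j as [|[|[|[|j]]]]; try lia;
unfold contract, dfun, Ham, H2, sum4, partial, Lambda, badd, wedge, Efield, Ufield, dtau, tau_, u_, v_, w_; simpl;
kill_derive; field; repeat split; auto; nra.
Qed.

Theorem mainTheorem1 (a b c : R) (Omega : pt -> Prop) :
  open4 Omega ->
  (forall p, Omega p ->
     u_ p <> v_ p /\ u_ p <> w_ p /\ v_ p <> w_ p /\ 0 < H2 a b c p) ->
  is_poisson_on Omega (Lambda a b c) /\
  (forall p, Omega p -> forall j, (j < 4)%nat ->
     dtau j p + Ufield a b c j p = contract (Lambda a b c) (dfun (Ham a b c)) j p).
Proof.
intros _ Hd; split.
- intros [[[t u] v] w] Hp i j k Hi Hj Hk.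
  destruct (Hd _ Hp) as (d1 & d2 & d3 & _); unfold u_, v_, w_ in *; simpl in *.
  apply schouten0; auto; lra.
- intros [[[t u] v] w] Hp j Hj.
  destruct (Hd _ Hp) as (d1 & d2 & d3 & d4); unfold u_, v_, w_ in d1, d2, d3; simpl in d1, d2, d3.
  apply ham_ok; auto; lra.
Qed.
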